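(* Let $\mathcal{L}$ be a propositional language and let $\mathcal{L}_1$ be an expansion of $\mathcal{L}$, with induced quantale embedding $i:\wp\Sigma_{\mathcal{L}}\to\wp\Sigma_{\mathcal{L}_1}$. Let $(D,\vdash)$ be a deductive system over $\mathcal{L}$ with associated nucleus $\gamma$ and $\wp\Sigma_{\mathcal{L}}$-module of theories $\mathrm{Th}$. Then $\mathrm{Th}$ is isomorphic to a $\wp\Sigma_{\mathcal{L}}$-submodule of $(\wp\Sigma_{\mathcal{L}_1}\otimes_{\wp\Sigma_{\mathcal{L}}}\mathrm{Th})_i$.
   Context: A quantale is a complete lattice $Q$ with a monoid structure $(Q,\cdot,1)$ whose product distributes over arbitrary joins on both sides. A left $Q$-module is a complete lattice $M$ with an action $Q\times M\to M$ that is associative, unital, and distributes over arbitrary joins in both arguments (right modules analogously); module homomorphisms preserve arbitrary joins and the action. A $Q$-module nucleus on $M$ is a closure operator $\gamma$ on $M$ with $a\gamma(u)\le\gamma(au)$; its image $M_\gamma$ is a $Q$-module with joins $\gamma(\bigvee\cdot)$ and action $a\cdot_\gamma u=\gamma(au)$. A propositional language $\mathcal{L}$ is a set of connectives with arities; fix a denumerable set $\mathrm{Var}$ of variables; $\mathit{Fm}_{\mathcal{L}}$ is the absolutely free $\mathcal{L}$-algebra over $\mathrm{Var}$, and $\Sigma_{\mathcal{L}}$ is the monoid (under composition) of its endomorphisms (substitutions). $\wp\Sigma_{\mathcal{L}}$ is the quantale of subsets of $\Sigma_{\mathcal{L}}$ with union as join, product $\Sigma\Sigma'=\{\sigma\sigma'\}$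 and unit $\{\mathrm{id}\}$. The domain $D$ of a deductive system is either $\mathit{Fm}_{\mathcal{L}}$, or $\mathit{Eq}=\mathit{Fm}_{\mathcal{L}}^2$, or $\mathit{Seq}_T=\bigcup_{(m,n)\in T}\mathit{Fm}_{\mathcal{L}}^m\times\mathit{Fm}_{\mathcal{L}}^n$ for some $T\subseteq\omega^2$; $\wp D$ is a left $\wp\Sigma_{\mathcal{L}}$-module with union as join and $\Sigma\cdot\Phi=\{\sigma(\varphi):\sigma\in\Sigma,\varphi\in\Phi\}$ (substitutions acting componentwise). A (structural) consequence relation $\vdash$ on $D$ (given by axioms and inference rules) corresponds to the $\wp\Sigma_{\mathcal{L}}$-module nucleus $\gamma(\Phi)=\{\psi:\Phi\vdash\psi\}$ on $\wp D$; its module of theories is $\mathrm{Th}=(\wp D)_\gamma$. An expansion $\mathcal{L}_1$ of $\mathcal{L}$ is a language containing all connectives of $\mathcal{L}$ with the same arities; $i$ sends $\Sigma\subseteq\Sigma_{\mathcal{L}}$ to the set of the unique $\mathcal{L}_1$-substitutions agreeing on $\mathrm{Var}$ with the elements of $\Sigma$. Via $i$, $\wp\Sigma_{\mathcal{L}_1}$ is a right $\wp\Sigma_{\mathcal{L}}$-module ($\Omega\cdot\Sigma=\Omega\, i(\Sigma)$). For a right $Q$-module $M_1$ and left $Q$-module $M_2$, the tensor product $M_1\otimes_Q M_2$ is the quotient of the free sup-lattice $\wp(M_1\times M_2)$ by the sup-lattice congruence generated by the pairs $(\{(\bigvee X,y)\},\bigcup_{x\in X}\{(x,y)\})$, $(\{(x,\bigvee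 Y)\},\bigcup_{y\in Y}\{(x,y)\})$, $(\{(xa,y)\},\{(x,ay)\})$; here $\wp\Sigma_{\mathcal{L}_1}\otimes_{\wp\Sigma_{\mathcal{L}}}\mathrm{Th}$ is a left $\wp\Sigma_{\mathcal{L}_1}$-module via left multiplication on the first factor. For a $\wp\Sigma_{\mathcal{L}_1}$-module $N$, $(N)_i$ denotes the $\wp\Sigma_{\mathcal{L}}$-module with the same sup-lattice and action $\Sigma\cdot u=i(\Sigma)u$. *)

(* Defs.v *)
From Stdlib Require Import List.
From Stdlib Require Vectors.Fin.

Record Lang := { conn : Type; arity : conn -> nat }.

Inductive Fm (L : Lang) : Type :=
| Var : nat -> Fm L
| App : forall c : conn L, (Fin.t (arity L c) -> Fm L) -> Fm L.
Arguments Var {L} _.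
Arguments App {L} _ _.

Definition is_endo {L : Lang} (s : Fm L -> Fm L) : Prop :=
  forall (c : conn L) (args : Fin.t (arity L c) -> Fm L),
    s (App c args) = App c (fun j => s (args j)).

Definition Subst (L : Lang) : Type := { s : Fm L -> Fm L | is_endo s }.
Definition app {L : Lang} (s : Subst L) : Fm L -> Fm L := proj1_sig s.

Definition SSet (L : Lang) : Type := Subst L -> Prop.

Definition sunion {L : Lang} (F : SSet L -> Prop) : SSet L :=
  fun s => exists X, F X /\ X s.

Definition sprod {L : Lang} (A B : SSet L) : SSet L :=
  fun t => exists s s', A s /\ B s' /\ forall f, app t f = app s (app s' f).

Record Expansion (L L1 : Lang) := {
  emb : conn L -> conn L1;
  emb_inj : forall c d, emb c = emb d -> c = d;
  emb_arity : forall c, arity L1 (emb c) = arity L c }.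
Arguments emb {L L1} _ _.
Arguments emb_inj {L L1} _ _ _ _.
Arguments emb_arity {L L1} _ _.

Fixpoint tr {L L1 : Lang} (E : Expansion L L1) (f : Fm L) : Fm L1 :=
  match f with
  | Var v => Var v
  | App c args =>
      App (emb E c)
        (fun j => tr E (args (eq_rect _ Fin.t j _ (emb_arity E c))))
  end.

Definition iemb {L L1 : Lang} (E : Expansion L L1) (A : SSet L) : SSet L1 :=
  fun t => exists s, A s /\ forall v, app t (Var v) = tr E (app s (Var v)).

Inductive DomKind : Type :=
| DFm
| DEq
| DSeq (T : nat -> nat -> Prop).

Definition Dom (L : Lang) (k : DomKind) : Type :=
  match k with
  | DFm => Fm L
  | DEq => (Fm L * Fm L)%type
  | DSeq T => { p : list (Fm L) * list (Fm L) | T (length (fst p)) (length (snd p)) }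
  end.

Lemma seq_len_map {L : Lang} (T : nat -> nat -> Prop) (g : Fm L -> Fm L)
  (p : list (Fm L) * list (Fm L)) :
  T (length (fst p)) (length (snd p)) ->
  T (length (fst (map g (fst p), map g (snd p))))
    (length (snd (map g (fst p), map g (snd p)))).
Proof. simpl. rewrite !length_map. exact (fun h => h). Qed.

Definition dsubst {L : Lang} (k : DomKind) (s : Subst L) : Dom L k -> Dom L k :=
  match k as k0 return Dom L k0 -> Dom L k0 with
  | DFm => fun f => app s f
  | DEq => fun p => (app s (fst p), app s (snd p))
  | DSeq T => fun p =>
      exist _ (map (app s) (fst (proj1_sig p)), map (app s) (snd (proj1_sig p)))
            (seq_len_map T (app s) (proj1_sig p) (proj2_sig p))
  end.

Definition pact {L : Lang} (k : DomKind) (a : SSet L) (P : Dom L k -> Prop)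
  : Dom L k -> Prop :=
  fun y => exists s x, a s /\ P x /\ y = dsubst k s x.

Record ConsRel (L : Lang) (k : DomKind) := {
  cr : (Dom L k -> Prop) -> Dom L k -> Prop;
  cr_refl : forall P x, P x -> cr P x;
  cr_mono : forall P Q x, (forall y, P y -> Q y) -> cr P x -> cr Q x;
  cr_cut : forall P Q x, (forall y, Q y -> cr P y) -> cr Q x -> cr P x;
  cr_struct : forall s P x, cr P x -> cr (pact k (fun t => t = s) P) (dsubst k s x) }.
Arguments cr {L k} _ _ _.

Definition gamma {L : Lang} {k : DomKind} (C : ConsRel L k) (P : Dom L k -> Prop)
  : Dom L k -> Prop := cr C P.

Definition Th {L : Lang} {k : DomKind} (C : ConsRel L k) : Type :=
  { P : Dom L k -> Prop | forall x, gamma C P x -> P x }.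

Definition thclose {L : Lang} {k : DomKind} (C : ConsRel L k) (P : Dom L k -> Prop)
  : Th C :=
  exist (fun Q : Dom L k -> Prop => forall x, gamma C Q x -> Q x) (gamma C P)
    (fun x h => cr_cut L k C P (cr C P) x (fun y hy => hy) h).

Definition thjoin {L : Lang} {k : DomKind} (C : ConsRel L k) (F : Th C -> Prop) : Th C :=
  thclose C (fun x => exists u, F u /\ proj1_sig u x).

Definition thact {L : Lang} {k : DomKind} (C : ConsRel L k) (a : SSet L) (u : Th C)
  : Th C := thclose C (pact k a (proj1_sig u)).

Section Tensor.
Context {L L1 : Lang} (E : Expansion L L1) {k : DomKind} (C : ConsRel L k).

Definition Pair : Type := (SSet L1 * Th C)%type.
Definition PSet : Type := Pair -> Prop.      (* the free sup-lattice ℘(M1 × M2) *)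

Definition sing (p : Pair) : PSet := fun q => q = p.

Definition is_suplat_cong (R : PSet -> PSet -> Prop) : Prop :=
  (forall X, R X X) /\
  (forall X Y, R X Y -> R Y X) /\
  (forall X Y Z, R X Y -> R Y Z -> R X Z) /\
  (forall P : (PSet * PSet) -> Prop,
     (forall XY, P XY -> R (fst XY) (snd XY)) ->
     R (fun p => exists XY, P XY /\ fst XY p) (fun p => exists XY, P XY /\ snd XY p)).

Definition tgens (R : PSet -> PSet -> Prop) : Prop :=
  (forall (Xs : SSet L1 -> Prop) (y : Th C),
     R (sing (sunion Xs, y)) (fun p => exists x, Xs x /\ p = (x, y))) /\
  (forall (x : SSet L1) (Ys : Th C -> Prop),
     R (sing (x, thjoin C Ys)) (fun p => exists y, Ys y /\ p = (x, y))) /\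
  (forall (x : SSet L1) (a : SSet L) (y : Th C),
     R (sing (sprod x (iemb E a), y)) (sing (x, thact C a y))).

Definition theta (X Y : PSet) : Prop :=
  forall R, is_suplat_cong R -> tgens R -> R X Y.

Definition Tens : Type :=
  { Cl : PSet -> Prop | exists X, forall Y, Cl Y <-> theta X Y }.

Definition tcls (X : PSet) : Tens :=
  exist (fun Cl : PSet -> Prop => exists X, forall Y, Cl Y <-> theta X Y)
    (theta X) (ex_intro _ X (fun Y => iff_refl (theta X Y))).

(* union of a class (its largest representative) *)
Definition trep (t : Tens) : PSet := fun p => exists X, proj1_sig t X /\ X p.

Definition tjoin (F : Tens -> Prop) : Tens :=
  tcls (fun p => exists t, F t /\ trep t p).

Definition tact (O : SSet L1) (t : Tens) : Tens :=
  tcls (fun p => exists x y, trep t (x, y) /\ p = (sprod O x, y)).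

Definition iact (a : SSet L) (t : Tens) : Tens := tact (iemb E a) t.

End Tensor.

(* Main.v *)
Require Import Defs.
From Stdlib Require Import FunctionalExtensionality PropExtensionality ProofIrrelevance ClassicalEpsilon.
From Stdlib Require Vectors.Fin.

Fixpoint substF {L : Lang} (g : nat -> Fm L) (f : Fm L) : Fm L :=
  match f with Var v => g v | App c args => App c (fun j => substF g (args j)) end.

Lemma substF_endo {L : Lang} (g : nat -> Fm L) : is_endo (substF g).
Proof. intros c args; reflexivity. Qed.
Definition mkS {L : Lang} (g : nat -> Fm L) : Subst L := exist _ (substF g) (substF_endo g).

Lemma endo_ext {L : Lang} (s1 s2 : Fm L -> Fm L) : is_endo s1 -> is_endo s2 ->
  (forall v, s1 (Var v) = s2 (Var v)) -> forall f, s1 f = s2 f.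
Proof.
  intros h1 h2 hv f; induction f as [v|c args IH]; [apply hv|].
  rewrite h1, h2; f_equal; apply functional_extensionality; exact IH.
Qed.

Lemma endo_comp {L : Lang} (s t : Fm L -> Fm L) : is_endo s -> is_endo t -> is_endo (fun f => s (t f)).
Proof. intros hs ht c args. rewrite ht, hs. reflexivity. Qed.
Definition compS {L : Lang} (s t : Subst L) : Subst L :=
  exist _ (fun f => app s (app t f)) (endo_comp _ _ (proj2_sig s) (proj2_sig t)).
Lemma id_endo (L : Lang) : is_endo (fun f : Fm L => f). Proof. intros c args; reflexivity. Qed.
Definition idS (L : Lang) : Subst L := exist _ (fun f => f) (id_endo L).

Lemma cast_cancel (n m : nat) (p : n = m) (q : m = n) (j : Fin.t n) :
  eq_rect m Fin.t (eq_rect n Fin.t j m p) n q = j.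
Proof. destruct p. rewrite (proof_irrelevance _ q eq_refl). reflexivity. Qed.

Definition pick {L L1 : Lang} (E : Expansion L L1) (d : conn L1) : option {c : conn L | emb E c = d} :=
  match excluded_middle_informative (exists c, emb E c = d) with
  | left h => Some (constructive_indefinite_description _ h)
  | right _ => None end.

Lemma pick_emb {L L1 : Lang} (E : Expansion L L1) c : pick E (emb E c) = Some (exist _ c eq_refl).
Proof.
  unfold pick. destruct (excluded_middle_informative _) as [h|h].
  - f_equal. destruct (constructive_indefinite_description _ h) as [c' e].
    assert (c' = c) by (apply (emb_inj E); exact e). subst c'.
    f_equal; apply proof_irrelevance.
  - exfalso; apply h; eauto.
Qed.

Definition castA {L L1 : Lang} (E : Expansion L L1) (c : conn L) (d : conn L1) (e : emb E c = d)
  (j : Fin.t (arity L c)) : Fin.t (arity L1 d) :=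
  eq_rect _ Fin.t j _ (eq_trans (eq_sym (emb_arity E c)) (f_equal (arity L1) e)).

Fixpoint proj {L L1 : Lang} (E : Expansion L L1) (f : Fm L1) : Fm L :=
  match f with
  | Var v => Var v
  | App d args =>
      match pick E d with
      | Some (exist _ c e) => App c (fun j => proj E (args (castA E c d e j)))
      | None => Var 0
      end
  end.

Lemma proj_App {L L1 : Lang} (E : Expansion L L1) d args :
  proj E (App d args) = match pick E d with
      | Some (exist _ c e) => App c (fun j => proj E (args (castA E c d e j)))
      | None => Var 0
      end.
Proof. reflexivity. Qed.

Lemma key {L L1 : Lang} (E : Expansion L L1) (t : Fm L1 -> Fm L1) : is_endo t ->
  forall phi, proj E (t (tr E phi)) = substF (fun v => proj E (t (Var v))) phi.
Proof.
  intros ht phi; induction phi as [v|c args IH]; [reflexivity|].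
  simpl tr. rewrite ht, proj_App, pick_emb. simpl substF. f_equal.
  apply functional_extensionality; intro j. unfold castA. rewrite cast_cancel. apply IH.
Qed.

Lemma tr_ext {L L1 : Lang} (E : Expansion L L1) (e : Fm L1 -> Fm L1) (s : Subst L) :
  is_endo e -> (forall v, e (Var v) = tr E (app s (Var v))) ->
  forall phi, e (tr E phi) = tr E (app s phi).
Proof.
  intros he hv phi; induction phi as [v|c args IH]; [apply hv|].
  simpl tr. rewrite he. unfold app. rewrite (proj2_sig s). simpl tr. f_equal.
  apply functional_extensionality; intro j. apply IH.
Qed.

Lemma sig_eq {A : Type} {P : A -> Prop} (x y : sig P) : proj1_sig x = proj1_sig y -> x = y.
Proof. destruct x, y; simpl; intros ->; f_equal; apply proof_irrelevance. Qed.

Lemma dsubst_comp {L : Lang} k (r s t : Subst L) (w : Dom L k) :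
  (forall f, app r f = app s (app t f)) -> dsubst k r w = dsubst k s (dsubst k t w).
Proof.
  intros h. destruct k; simpl.
  - apply h.
  - rewrite !h; reflexivity.
  - apply sig_eq; simpl. rewrite !List.map_map. f_equal; apply List.map_ext; intro; apply h.
Qed.

Lemma dsubst_id {L : Lang} k (r : Subst L) (w : Dom L k) :
  (forall f, app r f = f) -> dsubst k r w = w.
Proof.
  intros h. destruct k; simpl.
  - apply h.
  - rewrite !h; destruct w; reflexivity.
  - apply sig_eq; simpl. destruct w as [[l1 l2] hw]; simpl.
    rewrite !(List.map_ext (app r) (fun x => x) h), !List.map_id. reflexivity.
Qed.

Lemma set_eq {T : Type} (A B : T -> Prop) : (forall x, A x <-> B x) -> A = B.
Proof. intros h; apply functional_extensionality; intro x; apply propositional_extensionality, h. Qed.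

Section G.
End G.

Lemma gam_refl {L : Lang} {k} (C : ConsRel L k) (A : Dom L k -> Prop) d : A d -> gamma C A d.
Proof. apply cr_refl. Qed.
Lemma gam_mono {L : Lang} {k} (C : ConsRel L k) (A B : Dom L k -> Prop) :
  (forall d, A d -> B d) -> forall d, gamma C A d -> gamma C B d.
Proof. intros h d; apply cr_mono; exact h. Qed.
Lemma gam_sub {L : Lang} {k} (C : ConsRel L k) (A B : Dom L k -> Prop) :
  (forall d, A d -> gamma C B d) -> forall d, gamma C A d -> gamma C B d.
Proof. intros h d hd; apply (cr_cut L k C B A d h hd). Qed.
Lemma gam_equiv {L : Lang} {k} (C : ConsRel L k) (A B : Dom L k -> Prop) :
  (forall d, A d -> gamma C B d) -> (forall d, B d -> gamma C A d) ->
  forall d, gamma C A d <-> gamma C B d.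
Proof. intros h1 h2 d; split; apply gam_sub; assumption. Qed.
Lemma pact_mono {L : Lang} k (a : SSet L) (A B : Dom L k -> Prop) :
  (forall d, A d -> B d) -> forall d, pact k a A d -> pact k a B d.
Proof. intros h d (s & x & hs & hx & ->). exists s, x; auto. Qed.
Lemma nucleus {L : Lang} {k} (C : ConsRel L k) (a : SSet L) (A : Dom L k -> Prop) d :
  pact k a (gamma C A) d -> gamma C (pact k a A) d.
Proof.
  intros (s & x & hs & hx & ->).
  apply (cr_mono L k C (pact k (fun t => t = s) A)).
  - intros y (s' & x' & -> & hx' & ->). exists s, x'; auto.
  - apply cr_struct; exact hx.
Qed.

Definition rmap {L L1 : Lang} (E : Expansion L L1) (O : SSet L1) : SSet L :=
  fun sg => exists t, O t /\ forall v, app sg (Var v) = proj E (app t (Var v)).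

Definition Phi {L L1 : Lang} (E : Expansion L L1) {k} (C : ConsRel L k) (X : @PSet L L1 k C)
  : Dom L k -> Prop :=
  fun d => exists p, X p /\ pact k (rmap E (fst p)) (proj1_sig (snd p)) d.

Definition Rinv {L L1 : Lang} (E : Expansion L L1) {k} (C : ConsRel L k) (X Y : @PSet L L1 k C) : Prop :=
  forall d, gamma C (Phi E C X) d <-> gamma C (Phi E C Y) d.

Lemma Rinv_cong {L L1 : Lang} (E : Expansion L L1) {k} (C : ConsRel L k) :
  is_suplat_cong C (Rinv E C).
Proof.
  unfold Rinv; split; [|split; [|split]].
  - intros; tauto.
  - intros X Y h d; rewrite h; tauto.
  - intros X Y Z h1 h2 d; rewrite h1, h2; tauto.
  - intros P hP. apply gam_equiv.
    + intros d (p & (XY & hXY & hp) & hd).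
      assert (gamma C (Phi E C (snd XY)) d) as g.
      { apply hP; auto. apply gam_refl. exists p; auto. }
      revert g; apply gam_mono. intros d' (p' & hp' & hd'). exists p'; split; eauto.
    + intros d (p & (XY & hXY & hp) & hd).
      assert (gamma C (Phi E C (fst XY)) d) as g.
      { apply hP; auto. apply gam_refl. exists p; auto. }
      revert g; apply gam_mono. intros d' (p' & hp' & hd'). exists p'; split; eauto.
Qed.

Lemma Rinv_gens {L L1 : Lang} (E : Expansion L L1) {k} (C : ConsRel L k) :
  tgens E C (Rinv E C).
Proof.
  unfold Rinv; split; [|split].
  - intros Xs y. apply gam_equiv.
    + intros d (p & hp & hd). unfold sing in hp; subst p.
      destruct hd as (s & w & (t & (X & hX & ht) & hv) & hw & ->).
      apply gam_refl. exists (X, y); split; [exists X; auto|].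
      exists s, w; repeat split; auto. exists t; auto.
    + intros d (p & (X & hX & ->) & (s & w & (t & ht & hv) & hw & ->)).
      apply gam_refl. exists (sunion Xs, y); split; [reflexivity|].
      exists s, w; repeat split; auto. exists t; split; auto. exists X; auto.
  - intros x Ys. apply gam_equiv.
    + intros d (p & hp & hd).  unfold sing in hp; subst p. simpl in hd.
      apply nucleus in hd. revert hd; apply gam_mono.
      intros d0 (s & w & hs & (u & hu & hw) & ->).
      exists (x, u); split; [exists u; auto|]. exists s, w; auto.
    + intros d (p & (u & hu & ->) & hd). apply gam_refl.
      exists (x, thjoin C Ys); split; [reflexivity|]. simpl in *.
      revert hd; apply pact_mono. intros w hw. apply gam_refl. exists u; auto.
  - intros x a y.
    set (M := pact k (rmap E x) (pact k a (proj1_sig y))).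
    assert (hAM : forall d, pact k (rmap E (sprod x (iemb E a))) (proj1_sig y) d -> M d).
    { intros d (r & w & (tau & (t & e & ht & (s & hs & he) & hte) & hr) & hw & ->).
      exists (mkS (fun v => proj E (app t (Var v)))), (dsubst k s w). split; [|split].
      - exists t; split; auto.
      - exists s, w; auto.
      - apply dsubst_comp. apply endo_ext; [exact (proj2_sig r)|apply endo_comp; [apply substF_endo|exact (proj2_sig s)]|].
        intro v. rewrite hr, hte, he. apply key. exact (proj2_sig t). }
    assert (hMA : forall d, M d -> pact k (rmap E (sprod x (iemb E a))) (proj1_sig y) d).
    { intros d (sg & w' & (t & ht & hsg) & (s & w & hs & hw & ->) & ->).
      set (e := mkS (fun v => tr E (app s (Var v))) : Subst L1).
      exists (compS sg s), w. split; [|split; auto].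
      - exists (compS t e). split.
        + exists t, e; split; auto. split; [|intro; reflexivity]. exists s; split; auto.
        + intro v. unfold compS, app at 1 3; simpl. fold (app t). rewrite key by exact (proj2_sig t).
          apply endo_ext; [exact (proj2_sig sg)|apply substF_endo|]. intro v'. apply hsg.
      - symmetry; apply dsubst_comp. intro; reflexivity. }
    apply gam_equiv.
    + intros d (p & hp & hd).  unfold sing in hp; subst p. simpl in hd.
      apply gam_refl. exists (x, thact C a y); split; [reflexivity|]. simpl.
      apply hAM in hd. revert hd; apply pact_mono. intros; apply gam_refl; auto.
    + intros d (p & hp & hd).  unfold sing in hp; subst p. simpl in hd.
      apply nucleus in hd. revert hd; apply gam_mono. intros d0 hd.
      exists (sprod x (iemb E a), y); split; [reflexivity|]. simpl. apply hMA; exact hd.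
Qed.

Lemma theta_cong {L L1 : Lang} (E : Expansion L L1) {k} (C : ConsRel L k) :
  is_suplat_cong C (theta E C).
Proof.
  split; [|split; [|split]].
  - intros X R (r1 & r2 & r3 & r4) hg. apply r1.
  - intros X Y h R hR hg. pose proof hR as (r1 & r2 & r3 & r4). apply r2; apply h; auto.
  - intros X Y Z h1 h2 R hR hg. pose proof hR as (r1 & r2 & r3 & r4). apply (r3 _ Y); [apply h1|apply h2]; auto.
  - intros P hP R hR hg. pose proof hR as (r1 & r2 & r3 & r4). apply r4. intros XY hXY. apply hP; auto.
Qed.

Lemma theta_gens {L L1 : Lang} (E : Expansion L L1) {k} (C : ConsRel L k) :
  tgens E C (theta E C).
Proof.
  split; [|split].
  - intros Xs y R hR hg. apply hg.
  - intros x Ys R hR hg. apply hg.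
  - intros x a y R hR hg. apply hg.
Qed.

Lemma th_sym {L L1 : Lang} (E : Expansion L L1) {k} (C : ConsRel L k) X Y :
  theta E C X Y -> theta E C Y X.
Proof. destruct (theta_cong E C) as (r1 & r2 & r3 & r4). apply r2. Qed.
Lemma th_trans {L L1 : Lang} (E : Expansion L L1) {k} (C : ConsRel L k) X Y Z :
  theta E C X Y -> theta E C Y Z -> theta E C X Z.
Proof. destruct (theta_cong E C) as (r1 & r2 & r3 & r4). apply r3. Qed.
Lemma th_refl {L L1 : Lang} (E : Expansion L L1) {k} (C : ConsRel L k) X :
  theta E C X X.
Proof. destruct (theta_cong E C) as (r1 & r2 & r3 & r4). apply r1. Qed.

Lemma cong_union {L L1 : Lang} {k} (C : ConsRel L k) (R : @PSet L L1 k C -> @PSet L L1 k C -> Prop)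
  (hR : is_suplat_cong C R) (A : Type) (I : A -> Prop) (F G : A -> @PSet L L1 k C) :
  (forall i, I i -> R (F i) (G i)) ->
  R (fun p => exists i, I i /\ F i p) (fun p => exists i, I i /\ G i p).
Proof.
  intros h. destruct hR as (_ & _ & _ & hu).
  specialize (hu (fun XY => exists i, I i /\ XY = (F i, G i))).
  match type of hu with _ -> R ?X ?Y => replace (fun p => exists i, I i /\ F i p) with X; [replace (fun p => exists i, I i /\ G i p) with Y|] end.
  - apply hu. intros XY (i & hi & ->). apply h; auto.
  - apply set_eq; intro p; split;
      first [ intros ((X & Y) & (i & hi & e) & hp); injection e; intros; subst; eauto
            | intros (i & hi & hp); exists (F i, G i); simpl; eauto
            | intros (i & hi & hp); exists (F i, G i); simpl; eauto ].
  - apply set_eq; intro p; split;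
      first [ intros ((X & Y) & (i & hi & e) & hp); injection e; intros; subst; eauto
            | intros (i & hi & hp); exists (F i, G i); simpl; eauto ].
Qed.

Lemma tcls_eq {L L1 : Lang} (E : Expansion L L1) {k} (C : ConsRel L k) X Y :
  theta E C X Y -> tcls E C X = tcls E C Y.
Proof.
  intros h. apply sig_eq; simpl. apply set_eq; intro Z; split; intro hz.
  - eapply th_trans; [apply th_sym, h|exact hz].
  - eapply th_trans; [exact h|exact hz].
Qed.

Lemma tcls_inv {L L1 : Lang} (E : Expansion L L1) {k} (C : ConsRel L k) X Y :
  tcls E C X = tcls E C Y -> theta E C X Y.
Proof.
  intros h. apply (f_equal (@proj1_sig _ _)) in h. simpl in h.
  rewrite h. apply th_refl.
Qed.

Lemma trep_tcls {L L1 : Lang} (E : Expansion L L1) {k} (C : ConsRel L k) X :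
  theta E C (trep E C (tcls E C X)) X.
Proof.
  unfold trep; simpl.
  pose proof (cong_union C (theta E C) (theta_cong E C) _ (theta E C X) (fun Z => Z) (fun _ => X)) as h.
  replace (fun p => exists X0, theta E C X X0 /\ X0 p) with (fun p => exists i, theta E C X i /\ (fun Z => Z) i p) by reflexivity.
  eapply th_trans; [apply h|].
  - intros i hi. apply th_sym, hi.
  - replace (fun p => exists i, theta E C X i /\ X p) with X; [apply th_refl|].
    apply set_eq; intro p; split; [intro hp; exists X; split; auto; apply th_refl|intros (i & _ & hp); exact hp].
Qed.

Definition actP {L L1 : Lang} {k} (C : ConsRel L k) (O : SSet L1) (X : @PSet L L1 k C) : @PSet L L1 k C :=
  fun p => exists x y, X (x, y) /\ p = (sprod O x, y).

Lemma sprod_assoc {L : Lang} (A B D : SSet L) : sprod A (sprod B D) = sprod (sprod A B) D.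
Proof.
  apply set_eq; intro t; split.
  - intros (s & s' & hs & (b & d & hb & hd & e') & e).
    exists (compS s b), d. split; [exists s, b; split; [|split]; auto; intro; reflexivity|].
    split; auto. intro f. rewrite e, e'. reflexivity.
  - intros (s' & d & (s & b & hs & hb & e') & hd & e).
    exists s, (compS b d). split; auto. split; [exists b, d; split; [|split]; auto; intro; reflexivity|].
    intro f. rewrite e, e'. reflexivity.
Qed.

Lemma sprod_sunion {L : Lang} (O : SSet L) (Xs : SSet L -> Prop) :
  sprod O (sunion Xs) = sunion (fun Z => exists x, Xs x /\ Z = sprod O x).
Proof.
  apply set_eq; intro t; split.
  - intros (s & s' & hs & (X & hX & hs') & e). exists (sprod O X); split; [eauto|].
    exists s, s'; auto.
  - intros (Z & (X & hX & ->) & (s & s' & hs & hs' & e)). exists s, s'; split; auto.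
    split; auto. exists X; auto.
Qed.

Lemma act_compat {L L1 : Lang} (E : Expansion L L1) {k} (C : ConsRel L k) (O : SSet L1) X Y :
  theta E C X Y -> theta E C (actP C O X) (actP C O Y).
Proof.
  intros h. apply (h (fun X Y => theta E C (actP C O X) (actP C O Y))).
  - split; [|split; [|split]].
    + intros; apply th_refl.
    + intros; apply th_sym; auto.
    + intros; eapply th_trans; eauto.
    + intros P hP.
      pose proof (cong_union C (theta E C) (theta_cong E C) _ P (fun XY => actP C O (fst XY)) (fun XY => actP C O (snd XY)) hP) as hu.
      match type of hu with theta E C ?A ?B => replace (actP C O (fun p => exists XY, P XY /\ fst XY p)) with A; [replace (actP C O (fun p => exists XY, P XY /\ snd XY p)) with B|] end.
      * exact hu.
      * apply set_eq; intro p; split.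
        -- intros (XY & hXY & (x & y & hxy & ->)). exists x, y; split; auto. exists XY; auto.
        -- intros (x & y & (XY & hXY & hxy) & ->). exists XY; split; auto. exists x, y; auto.
      * apply set_eq; intro p; split.
        -- intros (XY & hXY & (x & y & hxy & ->)). exists x, y; split; auto. exists XY; auto.
        -- intros (x & y & (XY & hXY & hxy) & ->). exists XY; split; auto. exists x, y; auto.
  - split; [|split].
    + intros Xs y.
      replace (actP C O (sing C (sunion Xs, y))) with (sing C (sunion (fun Z => exists x, Xs x /\ Z = sprod O x), y)).
      2:{ apply set_eq; intro p; unfold sing, actP; split.
          - intros ->. exists (sunion Xs), y. rewrite sprod_sunion. auto.
          - intros (x & y' & e & ->). injection e; intros; subst. rewrite sprod_sunion. reflexivity. }
      eapply th_trans; [apply theta_gens|].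
      replace (actP C O (fun p => exists x, Xs x /\ p = (x, y))) with
        (fun p => exists x, (fun Z => exists x, Xs x /\ Z = sprod O x) x /\ p = (x, y)); [apply th_refl|].
      apply set_eq; intro p; unfold actP; split.
      * intros (Z & (x & hx & ->) & ->). exists x, y; split; eauto.
      * intros (x & y' & (x' & hx' & e) & ->). injection e; intros; subst. eauto.
    + intros x Ys.
      replace (actP C O (sing C (x, thjoin C Ys))) with (sing C (sprod O x, thjoin C Ys)).
      2:{ apply set_eq; intro p; unfold sing, actP; split.
          - intros ->. eauto.
          - intros (x' & y' & e & ->). injection e; intros; subst. reflexivity. }
      eapply th_trans; [apply theta_gens|].
      replace (actP C O (fun p => exists y, Ys y /\ p = (x, y))) with
        (fun p => exists y, Ys y /\ p = (sprod O x, y)); [apply th_refl|].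
      apply set_eq; intro p; unfold actP; split.
      * intros (y & hy & ->). exists x, y; split; eauto.
      * intros (x' & y' & (y & hy & e) & ->). injection e; intros; subst. eauto.
    + intros x a y.
      replace (actP C O (sing C (sprod x (iemb E a), y))) with (sing C (sprod (sprod O x) (iemb E a), y)).
      2:{ apply set_eq; intro p; unfold sing, actP; split.
          - intros ->. exists (sprod x (iemb E a)), y. rewrite sprod_assoc. auto.
          - intros (x' & y' & e & ->). injection e; intros; subst. rewrite sprod_assoc. reflexivity. }
      eapply th_trans; [apply theta_gens|].
      replace (actP C O (sing C (x, thact C a y))) with (sing C (sprod O x, thact C a y)); [apply th_refl|].
      apply set_eq; intro p; unfold sing, actP; split.
      * intros ->. eauto.
      * intros (x' & y' & e & ->). injection e; intros; subst. reflexivity.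
Qed.

Definition one (L1 : Lang) : SSet L1 := fun t => t = idS L1.

Lemma sprod_one_l {L L1 : Lang} (E : Expansion L L1) a : sprod (one L1) (iemb E a) = iemb E a.
Proof.
  apply set_eq; intro t; split.
  - intros (s & s' & -> & (s0 & hs0 & hv) & e). exists s0; split; auto. intro v. rewrite e. apply hv.
  - intros ht. exists (idS L1), t; split; [reflexivity|split; auto].
Qed.
Lemma sprod_one_r {L L1 : Lang} (E : Expansion L L1) a : sprod (iemb E a) (one L1) = iemb E a.
Proof.
  apply set_eq; intro t; split.
  - intros (s & s' & (s0 & hs0 & hv) & -> & e). exists s0; split; auto. intro v. rewrite e. apply hv.
  - intros ht. exists t, (idS L1); split; auto. split; [reflexivity|]. intro; reflexivity.
Qed.

Lemma Phi_one {L L1 : Lang} (E : Expansion L L1) {k} (C : ConsRel L k) (u : Th C) d :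
  Phi E C (sing C (one L1, u)) d <-> proj1_sig u d.
Proof.
  split.
  - intros (p & hp & hd). unfold sing in hp; subst p. simpl in hd.
    destruct hd as (s & w & (t & ht & hv) & hw & ->). unfold one in ht; subst t.
    rewrite dsubst_id; auto. apply endo_ext; [exact (proj2_sig s)|apply id_endo|].
    intro v; rewrite hv; reflexivity.
  - intros hd. exists (one L1, u); split; [reflexivity|]. exists (idS L), d.
    split; [|split; auto]. exists (idS L1); split; [reflexivity|]. intro; reflexivity.
    symmetry; apply dsubst_id; intro; reflexivity.
Qed.

Theorem theorem3p3 (L L1 : Lang) (E : Expansion L L1) (k : DomKind) (C : ConsRel L k) :
  exists (S : Tens E C -> Prop) (f : Th C -> Tens E C),
    (* S is a ℘Σ_L-submodule of (℘Σ_L1 ⊗ Th)_i *)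
    (forall F : Tens E C -> Prop, (forall t, F t -> S t) -> S (tjoin E C F)) /\
    (forall (a : SSet L) (t : Tens E C), S t -> S (iact E C a t)) /\
    (* f is a bijection from Th onto S *)
    (forall u, S (f u)) /\
    (forall t, S t -> exists u, f u = t) /\
    (forall u v, f u = f v -> u = v) /\
    (* f is a ℘Σ_L-module homomorphism *)
    (forall F : Th C -> Prop,
        f (thjoin C F) = tjoin E C (fun t => exists u, F u /\ t = f u)) /\
    (forall (a : SSet L) (u : Th C), f (thact C a u) = iact E C a (f u)).
Proof.
  set (f := fun u : Th C => tcls E C (sing C (one L1, u))).
  assert (hjoin : forall F : Th C -> Prop,
        f (thjoin C F) = tjoin E C (fun t => exists u, F u /\ t = f u)).
  { intros F. unfold tjoin, f. apply tcls_eq.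
    eapply th_trans; [apply theta_gens|].
    pose proof (cong_union C (theta E C) (theta_cong E C) _ F
                  (fun u => sing C (one L1, u)) (fun u => trep E C (f u))) as hu.
    replace (fun p => exists y, F y /\ p = (one L1, y)) with (fun p => exists i, F i /\ sing C (one L1, i) p)
      by (apply set_eq; intro p; unfold sing; tauto).
    eapply th_trans; [apply hu; intros i _; apply th_sym, trep_tcls|].
    replace (fun p => exists i, F i /\ trep E C (f i) p) with (fun p => exists t, (exists u, F u /\ t = f u) /\ trep E C t p);
      [apply th_refl|].
    apply set_eq; intro p; split.
    - intros (t & (u & hu' & ->) & hp). eauto.
    - intros (u & hu' & hp). eauto. }
  assert (hact : forall (a : SSet L) (u : Th C), f (thact C a u) = iact E C a (f u)).
  { intros a u. unfold iact, tact, f. apply tcls_eq.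
    apply (th_trans E C _ (actP C (iemb E a) (sing C (one L1, u)))).
    2:{ apply act_compat. apply th_sym. apply trep_tcls. }
    replace (actP C (iemb E a) (sing C (one L1, u))) with (sing C (sprod (one L1) (iemb E a), u)).
    - apply th_sym. apply (proj2 (proj2 (theta_gens E C))).
    - apply set_eq; intro p; unfold actP, sing; split.
      + intros ->. exists (one L1), u; split; auto. rewrite sprod_one_l, sprod_one_r. reflexivity.
      + intros (x & y & e & ->). injection e; intros; subst. rewrite sprod_one_l, sprod_one_r. reflexivity. }
  exists (fun t => exists u, f u = t), f.
  split; [|split; [|split; [|split; [|split; [|split]]]]].
  - intros F hF. exists (thjoin C (fun u => F (f u))). rewrite hjoin. f_equal.
    apply set_eq; intro t; split.
    + intros (u & hu & ->); exact hu.
    + intros ht. destruct (hF t ht) as (u & <-). eauto.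
  - intros a t (u & <-). exists (thact C a u). apply hact.
  - intros u; exists u; reflexivity.
  - intros t h; exact h.
  - intros u v h. apply tcls_inv in h.
    pose proof (h (Rinv E C) (Rinv_cong E C) (Rinv_gens E C)) as h2; clear h; rename h2 into h.
    apply sig_eq. apply set_eq; intro d.
    assert (hu : forall w : Th C, gamma C (Phi E C (sing C (one L1, w))) d <-> proj1_sig w d).
    { intros w. split.
      - intros g. apply (proj2_sig w). revert g; apply gam_mono. intros d0; apply Phi_one.
      - intros g. apply gam_refl, Phi_one, g. }
    rewrite <- hu, <- hu. apply h.
  - exact hjoin.
  - exact hact.
Qed.
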